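(* There is a deterministic distributed dynamic data structure for triangle membership listing which handles edge insertions and deletions in $O(1)$ amortized rounds.
   Context: Highly dynamic network model: a synchronous network on a fixed set $V$ of $n$ nodes with unique identifiers starts as the empty graph; at the beginning of round $i$ the graph is $G_i=(V,E_i)$, obtained from the previous graph by an adversary inserting and/or deleting an arbitrary (unbounded) set of edges. At the start of each round every node is notified only of the insertions/deletions of edges incident to it; then each node may send a message of $O(\log n)$ bits to each of its current neighbors. A distributed dynamic data structure consists of a local part $DS_v$ at each node $v$; at the end of every round, $DS_v$ may be queried and must answer immediately, without any further communication, either with a correct answer to the query or with the answer $\texttt{inconsistent}$. The amortized round complexity is at most $k$ if for every round $i$, the number of rounds up to round $i$ in which at least one node $v$ has $DS_v$ in an inconsistent state, divided by the total number of topology changes (edge insertions/deletions) that occurred up to round $i$, is at most $k$. Triangle membership listing: the data structure $DS_v$ at each node $v$ must respond at the end of round $i$ to a query of the form $\{v,u,w\}$ with $\texttt{true}$ if $\{v,u,w\}$ forms a triangle in $G_i$, $\texttt{false}$ if it does not, or $\texttt{inconsistent}$. *)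

(* Defs.v *)
From mathcomp Require Import all_boot.

Set Implicit Arguments.
Unset Strict Implicit.
Unset Printing Implicit Defensive.

(* An adversary is a sequence of graphs G 0, G 1, G 2, ... given by their
   adjacency relations; G i is the graph at the beginning (and during) round i.
   Round 0 is the initial state (empty graph); the rounds are i = 1, 2, ... *)
Definition graph_seq (n : nat) := nat -> 'I_n -> 'I_n -> bool.

Definition valid_adversary n (G : graph_seq n) : Prop :=
  [/\ (forall u v, G 0 u v = false),
      (forall i u v, G i u v = G i v u)
    & (forall i u, G i u u = false)].

(* Answers to queries: Some true = true, Some false = false,
   None = inconsistent. *)
Definition answer := option bool.

(* A deterministic distributed algorithm on n nodes with messages taken
   from 'I_B (plus the possibility of sending nothing).  Each node v runs
   the same code, parameterised by its identifier v.  In round i: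
   - [notify v s ins del]: v is told the sets of nodes u such that the edge
     {v,u} was inserted (ins) resp. deleted (del) at the beginning of round i;
   - [send v s u]: message sent by v to its current neighbour u;
   - [receive v s inbox]: v updates its state with the messages received
     from its current neighbours (inbox u = None if u is not a neighbour
     or sent nothing);
   - [query v s u w]: the answer of DS_v to the query {v,u,w} at the end of
     the round, computed locally without communication. *)
Record algorithm (n B : nat) := Algorithm {
  state : Type;
  init : 'I_n -> state;
  notify : 'I_n -> state -> {set 'I_n} -> {set 'I_n} -> state;
  send : 'I_n -> state -> 'I_n -> option 'I_B;
  receive : 'I_n -> state -> ('I_n -> option 'I_B) -> state;
  query : 'I_n -> state -> 'I_n -> 'I_n -> answer }.

Arguments state {n B} a.
Arguments init {n B} a _.
Arguments notify {n B} a _ _ _ _.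
Arguments send {n B} a _ _ _.
Arguments receive {n B} a _ _ _.
Arguments query {n B} a _ _ _ _.

Definition notified n B (A : algorithm n B) (G : graph_seq n) (i : nat)
    (prev : 'I_n -> state A) (v : 'I_n) : state A :=
  notify A v (prev v) [set u | G i.+1 v u && ~~ G i v u]
                      [set u | ~~ G i.+1 v u && G i v u].

Arguments notified {n B} A G i prev v.

Fixpoint run n B (A : algorithm n B) (G : graph_seq n) (i : nat) : 'I_n -> state A :=
  match i with
  | 0 => init A
  | i'.+1 => fun v =>
      let s1 := notified A G i' (run A G i') in
      receive A v (s1 v) (fun u => if G i'.+1 v u then send A u (s1 u) v else None)
  end.

Arguments run {n B} A G i _.

Definition is_triangle n (G : graph_seq n) (i : nat) (v u w : 'I_n) : bool :=
  [&& G i v u, G i u w & G i v w].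

Definition acceptable (a : answer) (b : bool) : bool :=
  match a with Some a' => a' == b | None => true end.

Definition inconsistent_round n B (A : algorithm n B) (G : graph_seq n) (i : nat) : bool :=
  [exists v, exists u, exists w, query A v (run A G i v) u w == None].

Arguments inconsistent_round {n B} A G i.

Definition changes n (G : graph_seq n) (j : nat) : nat :=
  #|[set p : 'I_n * 'I_n | (p.1 < p.2)%N && (G j p.1 p.2 != G j.-1 p.1 p.2)]|.

Definition num_inconsistent_rounds n B (A : algorithm n B) (G : graph_seq n) (i : nat) : nat :=
  \sum_(1 <= j < i.+1) inconsistent_round A G j.

Arguments num_inconsistent_rounds {n B} A G i.

Definition total_changes n (G : graph_seq n) (i : nat) : nat :=
  \sum_(1 <= j < i.+1) changes G j.

Arguments total_changes {n} G i.
Arguments changes {n} G j.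
Arguments is_triangle {n} G i v u w.

(* Message alphabet of size (n+1)^c, i.e. O(log n)-bit messages. *)
Definition msg_bound (c n : nat) : nat := (n.+1) ^ c.

Definition triangle_DS_amortized n B (A : algorithm n B) (k : nat) : Prop :=
  forall G : graph_seq n, valid_adversary G ->
    (forall i, (0 < i)%N -> forall v u w,
        acceptable (query A v (run A G i v) u w) (is_triangle G i v u w)) /\
    (forall i, (num_inconsistent_rounds A G i <= k * total_changes G i)%N).

Arguments triangle_DS_amortized {n B} A k.

(* Main.v *)
Require Import Defs.
From mathcomp Require Import all_boot.
From mathcomp Require Import zify.
Set Implicit Arguments.
Unset Strict Implicit.
Unset Printing Implicit Defensive.

Section Alg.
Variable n : nat.
Notation V := 'I_n.
Definition T := (bool * V * bool * bool)%type.
Definition Bn := msg_bound 4 n.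

Lemma cardT_le : #|{: T}| <= Bn.
Proof.
rewrite !card_prod !card_bool card_ord /Bn /msg_bound.
rewrite !expnS expn0. nia.
Qed.

Definition enc (t : T) : 'I_Bn := widen_ord cardT_le (enum_rank t).
Definition dec (o : option 'I_Bn) : option T :=
  if o is Some i then
    if @insub _ (fun k => k < #|{: T}|) 'I_#|{: T}| (val i) is Some j then Some (enum_val j) else None
  else None.

Lemma decK t : dec (Some (enc t)) = Some t.
Proof. by rewrite /dec /enc /= (valK (enum_rank t)) enum_rankK. Qed.

Record st := St { adj : {set V}; ann : V -> {set V}; rep : V -> {set V};
                  E : V -> V -> bool; bad : bool }.

Definition pick_item (a r : {set V}) : option (bool * V) :=
  match [pick x in a] with
  | Some x => Some (true, x)
  | None => match [pick x in r] with Some x => Some (false, x) | None => None end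
  end.

Definition rem_a a r := if pick_item a r is Some (true, x) then a :\ x else a.
Definition rem_r a r := if pick_item a r is Some (false, x) then r :\ x else r.

Definition msg (s : st) (v : V) : option T :=
  let a := ann s v in let r := rep s v in
  if pick_item a r is Some (k, x) then
    Some (k, x, x \in adj s, (rem_a a r :|: rem_r a r) != set0)
  else None.

Definition init0 (v : V) : st := St set0 (fun _ => set0) (fun _ => set0) (fun _ _ => false) false.

Definition ntf (v : V) (s : st) (ins del : {set V}) : st :=
  let ch := ins :|: del in
  St ((adj s :|: ins) :\: del)
     (fun y => if y \in ins then ch else ann s y :|: ch)
     (fun y => if y \in ins then set0 else rep s y)
     (E s) (bad s).

Definition snd (v : V) (s : st) (u : V) : option 'I_Bn := omap enc (msg s u).

Definition replyset (o : option T) : {set V} :=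
  if o is Some (true, x, _, _) then [set x] else set0.

Definition flag_of (o : option T) : bool := if o is Some (_, _, _, f) then f else false.

Definition newE (inbox : V -> option 'I_Bn) (e : V -> V -> bool) (p q : V) : bool :=
  match dec (inbox p) with
  | Some (_, x, b, _) => if x == q then b else
      match dec (inbox q) with
      | Some (_, y, b', _) => if y == p then b' else e p q
      | None => e p q end
  | None =>
      match dec (inbox q) with
      | Some (_, y, b', _) => if y == p then b' else e p q
      | None => e p q end
  end.

Definition rcv (v : V) (s : st) (inbox : V -> option 'I_Bn) : st :=
  St (adj s)
     (fun y => rem_a (ann s y) (rep s y))
     (fun y => rem_r (ann s y) (rep s y) :|: replyset (dec (inbox y)))
     (newE inbox (E s))
     [exists y, (y \in adj s) && (flag_of (dec (inbox y)) || (ann s y != set0))].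

Definition qry (v : V) (s : st) (u w : V) : answer :=
  if bad s then None else Some [&& u \in adj s, w \in adj s, u != w & E s u w].

Definition Alg : algorithm n Bn := @Algorithm n Bn st init0 ntf snd rcv qry.

End Alg.
Section L.
Variable n : nat.
Notation V := 'I_n.
Variant pick_spec (a r : {set V}) : option (bool * V) -> {set V} -> {set V} -> Type :=
  | PA x of x \in a : pick_spec a r (Some (true,x)) (a :\ x) r
  | PR x of a = set0 & x \in r : pick_spec a r (Some (false,x)) a (r :\ x)
  | PN of a = set0 & r = set0 : pick_spec a r None a r.

Lemma pickP' a r : pick_spec a r (pick_item a r) (rem_a a r) (rem_r a r).
Proof.
rewrite /rem_a /rem_r /pick_item.
case: pickP => [x xa|a0]; first by constructor.
have ea : a = set0 by apply/setP => y; rewrite inE a0.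
case: pickP => [x xr|r0]; first by constructor.
have er : r = set0 by apply/setP => y; rewrite inE r0.
by constructor.
Qed.

Definition cost (a r : {set V}) := 2 * #|a| + #|r|.
Definition isA (o : option (bool * V)) : nat := if o is Some (true, _) then 1 else 0.
Definition isR (o : option (bool * V)) : nat := if o is Some (false, _) then 1 else 0.

Lemma cost_rem a r : cost (rem_a a r) (rem_r a r) + 2 * isA (pick_item a r) + isR (pick_item a r) = cost a r.
Proof.
rewrite /cost; case: pickP' => [x xa|x _ xr|_ _] /=.
- rewrite (cardsD1 x a) xa /=; lia.
- rewrite (cardsD1 x r) xr /=; lia.
- lia.
Qed.

Lemma cost_pos a r : 0 < cost a r -> isA (pick_item a r) + isR (pick_item a r) = 1.
Proof. rewrite /cost; case: pickP' => //= -> ->; by rewrite !cards0. Qed.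

Lemma replyset_card (s : st n) u : #|replyset (msg s u)| = isA (pick_item (ann s u) (rep s u)).
Proof.
rewrite /msg; case: pickP' => [x _|x _ _|_ _] /=; by rewrite ?cards1 ?cards0.
Qed.

Lemma cardU_le (A B : {set V}) : #|A :|: B| <= #|A| + #|B|.
Proof. rewrite cardsU; lia. Qed.
End L.
Section R.
Variable n : nat.
Notation V := 'I_n.
Variable G : graph_seq n.
Hypothesis HG : valid_adversary G.

Definition R i : V -> st n := run (Alg n) G i.
Definition N i : V -> st n := notified (Alg n) G i (run (Alg n) G i).
Definition IB i (v u : V) : option 'I_(Bn n) := if G i.+1 v u then snd u (N i u) v else None.

Lemma RS i v : R i.+1 v = rcv v (N i v) (IB i v).
Proof. by []. Qed.
Lemma NE i v : N i v = ntf v (R i v) [set u | G i.+1 v u && ~~ G i v u] [set u | ~~ G i.+1 v u && G i v u].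
Proof. by []. Qed.
Lemma decIB i v u : dec (IB i v u) = if G i.+1 v u then msg (N i u) v else None.
Proof. rewrite /IB; case: (G _ v u) => //; rewrite /snd; case: (msg _ _) => //= t; exact: decK. Qed.

Lemma Gsym i u v : G i u v = G i v u.
Proof. by case: HG => _ h _; apply: h. Qed.
Lemma Girr i u : G i u u = false.
Proof. by case: HG. Qed.

Lemma adj_rcv v (s : st n) ib : adj (rcv v s ib) = adj s. Proof. by []. Qed.
Lemma adj_ntf v (s : st n) a b : adj (ntf v s a b) = (adj s :|: a) :\: b. Proof. by []. Qed.

Lemma adjR i v : adj (R i v) = [set x | G i v x].
Proof.
elim: i v => [|i IH] v.
  apply/setP => x; rewrite /R /= !inE; case: HG => h0 _ _; by rewrite h0.
rewrite RS adj_rcv NE adj_ntf IH; apply/setP => x; rewrite !inE.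
by case: (G i.+1 v x); case: (G i v x).
Qed.

Lemma adjN i v : adj (N i v) = [set x | G i.+1 v x].
Proof. by rewrite -(adjR i.+1 v) RS adj_rcv. Qed.

Definition ch i u := [set x | G i.+1 u x != G i u x].

Lemma ch_le i u : #|ch i u| <= changes G i.+1.
Proof.
rewrite /changes.
pose f (x : V) := if (u < x)%N then (u, x) else (x, u).
have inj : {in ch i u &, injective f}.
  pose g (p : V * V) := if p.1 == u then p.2 else p.1.
  have gf x : x \in ch i u -> g (f x) = x.
    rewrite inE => hx; have xu : x != u by apply: contraNneq hx => ->; rewrite !Girr.
    rewrite /g /f; case: ltnP => _ /=; first by rewrite eqxx.
    by rewrite (negbTE xu).
  by move=> x y hx hy e; rewrite -(gf x hx) -(gf y hy) e.
rewrite -(card_in_imset inj); apply: subset_leq_card; apply/subsetP => p /imsetP [x].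
rewrite inE /f => hx ->{p} /=; move: (hx); rewrite inE => hx'.
have xu : x != u by apply: contraNneq hx' => ->; rewrite !Girr.
case: (ltnP u x) => h /=.
  by rewrite h.
have hxu : (x < u)%N by rewrite ltn_neqAle h andbT; move: xu; apply: contra => /eqP/val_inj ->.
by rewrite hxu /= Gsym [G i x u]Gsym.
Qed.

Lemma annN i u v : G i.+1 u v ->
  ann (N i u) v = if G i u v then ann (R i u) v :|: ch i u else ch i u.
Proof.
move=> h; rewrite NE /= !inE h /=.
have -> : [set u0 | G i.+1 u u0 && ~~ G i u u0] :|: [set u0 | ~~ G i.+1 u u0 && G i u u0] = ch i u.
  by apply/setP => x; rewrite !inE; case: (G i.+1 u x); case: (G i u x).
by case: (G i u v).
Qed.

Lemma repN i u v : G i.+1 u v -> rep (N i u) v = if G i u v then rep (R i u) v else set0.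
Proof. by move=> h; rewrite NE /= !inE h /=; case: (G i u v). Qed.

Lemma costN i u v : G i.+1 u v ->
  cost (ann (N i u) v) (rep (N i u) v) <=
  (if G i u v then cost (ann (R i u) v) (rep (R i u) v) else 0) + 2 * #|ch i u|.
Proof.
move=> h; rewrite annN // repN //; rewrite /cost.
case: (G i u v); last by rewrite cards0 addn0 add0n.
have := cardU_le (ann (R i u) v) (ch i u).
set a := #|_ :|: _|; set b := #|ann _ _|; set c := #|ch i u|; set d := #|rep _ _|. lia.
Qed.

Definition Psi (S : V -> st n) u v :=
  cost (ann (S u) v) (rep (S u) v) + cost (ann (S v) u) (rep (S v) u).

Lemma annR i u v : ann (R i.+1 u) v = rem_a (ann (N i u) v) (rep (N i u) v).
Proof. by rewrite RS. Qed.
Lemma repR i u v : rep (R i.+1 u) v =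
  rem_r (ann (N i u) v) (rep (N i u) v) :|: replyset (dec (IB i u v)).
Proof. by rewrite RS. Qed.

Lemma cost_end i u v : G i.+1 u v ->
  cost (ann (R i.+1 u) v) (rep (R i.+1 u) v) + 2 * isA (pick_item (ann (N i u) v) (rep (N i u) v))
   + isR (pick_item (ann (N i u) v) (rep (N i u) v))
  <= cost (ann (N i u) v) (rep (N i u) v) + isA (pick_item (ann (N i v) u) (rep (N i v) u)).
Proof.
move=> h; rewrite annR repR decIB h.
have := cost_rem (ann (N i u) v) (rep (N i u) v).
have := cardU_le (rem_r (ann (N i u) v) (rep (N i u) v)) (replyset (msg (N i v) u)).
rewrite replyset_card /cost; lia.
Qed.

Fixpoint Bs j := if j is j'.+1 then Bs j' + 4 * changes G j'.+1 - 1 else 0.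

Lemma Psi_bound i u v : G i u v -> Psi (R i) u v <= Bs i.
Proof.
elim: i u v => [|i IH] u v h; first by case: HG h => h0 _ _; rewrite h0.
have e1 := cost_end h.
have h' : G i.+1 v u by rewrite Gsym.
have e2 := cost_end h'.
have c1 := costN h; have c2 := costN h'.
have l1 := ch_le i u; have l2 := ch_le i v.
have hB : (if G i u v then Psi (R i) u v else 0) <= Bs i.
  by case hh: (G i u v) => //; apply: IH.
rewrite [G i v u]Gsym in c2.
have -> : Bs i.+1 = Bs i + 4 * changes G i.+1 - 1 by [].
rewrite /Psi.
case hp: (0 < cost (ann (N i u) v) (rep (N i u) v) + cost (ann (N i v) u) (rep (N i v) u)).
- have : 0 < cost (ann (N i u) v) (rep (N i u) v) \/ 0 < cost (ann (N i v) u) (rep (N i v) u) by lia.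
  case=> /cost_pos hc.
  + move: hB c1 c2 e1 e2 hc; rewrite /Psi; case: (G i u v); lia.
  + move: hB c1 c2 e1 e2 hc; rewrite /Psi; case: (G i u v); lia.
- move: e1 e2 hp; lia.
Qed.

Lemma cost_gt0 (a r : {set V}) z : (z \in a) || (z \in r) -> 0 < cost a r.
Proof.
rewrite /cost => /orP [] hz.
  have : 0 < #|a| by rewrite card_gt0; apply/set0Pn; exists z.
  lia.
have : 0 < #|r| by rewrite card_gt0; apply/set0Pn; exists z.
lia.
Qed.

Lemma badR i v : bad (R i.+1 v) =
  [exists y, (y \in adj (N i v)) && (flag_of (dec (IB i v y)) || (ann (N i v) y != set0))].
Proof. by rewrite RS. Qed.

Lemma bad_psi i v : bad (R i.+1 v) -> exists y, G i.+1 v y /\ 0 < Psi (R i.+1) v y.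
Proof.
rewrite badR => /existsP [y /andP [hy hf]].
move: hy; rewrite adjN inE => hy.
exists y; split => //.
have hy' : G i.+1 y v by rewrite Gsym.
rewrite /Psi; move: hf; rewrite decIB hy => /orP [] hf.
- suff : 0 < cost (ann (R i.+1 y) v) (rep (R i.+1 y) v) by lia.
  rewrite annR repR; move: hf; rewrite /msg.
  case: pickP' => [x _|x _ _|_ _] //= /set0Pn [z] hz;
    apply: (cost_gt0 (z := z)); move: hz; rewrite in_setU;
    by case/orP => h; rewrite ?in_setU h ?orbT.
- suff : 0 < cost (ann (R i.+1 y) v) (rep (R i.+1 y) v) by lia.
  rewrite repR decIB hy' /msg; move: hf.
  case: (pickP' (ann (N i v) y) (rep (N i v) y)) => [x _|x -> _|-> _]; rewrite ?eqxx //= => _.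
  apply: (cost_gt0 (z := x)); by rewrite !inE eqxx !orbT.
Qed.

Lemma inc_pos i : inconsistent_round (Alg n) G i.+1 -> 0 < Bs i.+1.
Proof.
move=> /existsP [v /existsP [u /existsP [w /eqP]]].
rewrite /= /qry -/(R i.+1 v); case hb: (bad (R i.+1 v)) => // _.
have [y [hy hp]] := bad_psi hb.
exact: leq_trans hp (Psi_bound hy).
Qed.

Lemma sumB I : Bs I + \sum_(1 <= j < I.+1) (0 < Bs j) <= 4 * total_changes G I.
Proof.
rewrite /total_changes.
elim: I => [|I IH]; first by rewrite !big_geq.
rewrite !(big_nat_recr I.+1) //.
move: IH; set S1 := \sum_(1 <= j < I.+1) _; set S2 := \sum_(1 <= j < I.+1) _ => IH.
rewrite [Bs I.+1]/=.
set c := changes G I.+1.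
have : Bs I + 4 * c - 1 + (0 < Bs I + 4 * c - 1) <= Bs I + 4 * c.
  case: (posnP (Bs I + 4 * c - 1)) => [->|hb]; rewrite ?hb /=; lia.
move: IH; generalize (nat_of_bool (0 < Bs I + 4 * c - 1)) => k. rewrite /=; lia.
Qed.

Lemma num_bound I : num_inconsistent_rounds (Alg n) G I <= 4 * total_changes G I.
Proof.
apply: leq_trans (sumB I); apply: leq_trans (leq_addl _ _).
rewrite /num_inconsistent_rounds big_nat_cond [X in _ <= X]big_nat_cond.
apply: leq_sum => j /andP [/andP [hj _] _].
case: j hj => // j _.
by case hi: (inconsistent_round _ _ _) => //; rewrite inc_pos.
Qed.

Definition Pend (S : V -> st n) v u w :=
  [|| w \in ann (S u) v, w \in rep (S u) v, u \in ann (S w) v, u \in rep (S w) v,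
      u \in ann (S v) w | w \in ann (S v) u].

Definition nrep (o : option (T n)) (w : V) := if o is Some (_, x, _, _) then x != w else true.

Lemma X1 i u v w : G i.+1 u v -> (w \in ann (N i u) v) || (w \in rep (N i u) v) ->
  nrep (msg (N i u) v) w -> (w \in ann (R i.+1 u) v) || (w \in rep (R i.+1 u) v).
Proof.
move=> h; rewrite annR repR /msg.
move: (replyset _) => rp.
case: pickP' => [x _|x -> _|-> ->]; cbn [nrep]; rewrite ?in_set0 //=.
- move=> /orP [hw|hw] xw; apply/orP; [left; by rewrite in_setD1 eq_sym xw hw | right; by rewrite in_setU hw].
- by move=> hw xw; rewrite in_setU in_setD1 eq_sym xw hw.
Qed.

Lemma X2 i v w u : G i.+1 v w -> u \in ann (N i v) w ->
  (u \in ann (R i.+1 v) w) || (u \in rep (R i.+1 w) v).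
Proof.
move=> h; have h' : G i.+1 w v by rewrite Gsym.
rewrite annR repR decIB h' /msg.
move: (rem_r (ann (N i w) v) (rep (N i w) v)) => rr.
case: (pickP' (ann (N i v) w) (rep (N i v) w)) => [x _|x -> _|-> _]; rewrite ?in_set0 //.
move=> hu; case: (eqVneq u x) => [->|ux]; first by rewrite in_setU set11 !orbT.
by rewrite in_setD1 ux hu.
Qed.

Lemma msg_b (s : st n) v k x b f : msg s v = Some (k, x, b, f) -> b = (x \in adj s).
Proof. rewrite /msg; case: (pickP' (ann s v) (rep s v)) => [y _|y _ _|_ _] //; by case=> *; subst. Qed.

Lemma ch_ann i u v x : G i.+1 u v -> x \in ch i u -> x \in ann (N i u) v.
Proof. by move=> h hx; rewrite annN //; case: (G i u v) => //; rewrite in_setU hx orbT. Qed.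

Lemma core i v u w : G i.+1 v u -> G i.+1 v w -> u != w ->
  (forall v u w, G i v u -> G i v w -> u != w -> (E (R i v) u w == G i u w) || Pend (R i) v u w) ->
  nrep (msg (N i u) v) w -> nrep (msg (N i w) v) u ->
  (E (R i v) u w == G i.+1 u w) || Pend (R i.+1) v u w.
Proof.
move=> hu hw uw IH nu nw.
have hu' : G i.+1 u v by rewrite Gsym.
have hw' : G i.+1 w v by rewrite Gsym.
rewrite /Pend.
case hc: (G i.+1 u w != G i u w).
  have hx : w \in ch i u by rewrite inE hc.
  have := X1 hu' (introT orP (or_introl (ch_ann hu' hx))) nu.
  by case/orP => ->; rewrite ?orbT.
move/negbFE/eqP: hc => hc.
case hvu: (G i v u); last first.
  have hx : u \in ch i v by rewrite inE hu hvu.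
  by case/orP: (X2 hw (ch_ann hw hx)) => ->; rewrite ?orbT.
case hvw: (G i v w); last first.
  have hx : w \in ch i v by rewrite inE hw hvw.
  by case/orP: (X2 hu (ch_ann hu hx)) => ->; rewrite ?orbT.
have hvu' : G i u v by rewrite Gsym.
have hvw' : G i w v by rewrite Gsym.
case/orP: (IH v u w hvu hvw uw) => [|P]; first by rewrite hc => ->.
have Au : forall x, (x \in ann (R i u) v) || (x \in rep (R i u) v) ->
    (x \in ann (N i u) v) || (x \in rep (N i u) v).
  by move=> x; rewrite annN // repN // hvu' inE; case/orP => ->; rewrite ?orbT.
have Aw : forall x, (x \in ann (R i w) v) || (x \in rep (R i w) v) ->
    (x \in ann (N i w) v) || (x \in rep (N i w) v).
  by move=> x; rewrite annN // repN // hvw' inE; case/orP => ->; rewrite ?orbT.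
case/or4P: P => [h|h|h|]; last case/or3P => [h|h|h].
- by case/orP: (X1 hu' (Au w (introT orP (or_introl h))) nu) => ->; rewrite ?orbT.
- by case/orP: (X1 hu' (Au w (introT orP (or_intror h))) nu) => ->; rewrite ?orbT.
- by case/orP: (X1 hw' (Aw u (introT orP (or_introl h))) nw) => ->; rewrite ?orbT.
- by case/orP: (X1 hw' (Aw u (introT orP (or_intror h))) nw) => ->; rewrite ?orbT.
- have h2 : u \in ann (N i v) w by rewrite annN // hvw inE h.
  by case/orP: (X2 hw h2) => ->; rewrite ?orbT.
- have h2 : w \in ann (N i v) u by rewrite annN // hvu inE h.
  by case/orP: (X2 hu h2) => ->; rewrite ?orbT.
Qed.

Lemma ER i v : E (R i.+1 v) = newE (IB i v) (E (R i v)).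
Proof. by rewrite RS. Qed.

Lemma Inv i : forall v u w, G i v u -> G i v w -> u != w ->
  (E (R i v) u w == G i u w) || Pend (R i) v u w.
Proof.
elim: i => [|i IH] v u w hu hw uw.
  by case: HG hu => h0 _ _; rewrite h0.
rewrite ER /newE !decIB hu hw.
case mu: (msg (N i u) v) => [[[[k x] b] f]|].
  have -> := msg_b mu; rewrite adjN inE.
  case: (eqVneq x w) => [->|xw]; first by rewrite eqxx.
  case mw: (msg (N i w) v) => [[[[k' y] b'] f']|].
    have -> := msg_b mw; rewrite adjN inE.
    case: (eqVneq y u) => [->|yu]; first by rewrite Gsym eqxx.
    by apply: core => //; rewrite ?mu ?mw.
  by apply: core => //; rewrite ?mu ?mw.
case mw: (msg (N i w) v) => [[[[k' y] b'] f']|].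
  have -> := msg_b mw; rewrite adjN inE.
  case: (eqVneq y u) => [->|yu]; first by rewrite Gsym eqxx.
  by apply: core => //; rewrite ?mu ?mw.
by apply: core => //; rewrite ?mu ?mw.
Qed.

Lemma flag_msg (s : st n) v w : w \in rem_a (ann s v) (rep s v) :|: rem_r (ann s v) (rep s v) ->
  flag_of (msg s v).
Proof.
rewrite /msg; case: (pickP' (ann s v) (rep s v)) => [y _|y _ _|-> ->] /=;
  try by move=> hw; apply/set0Pn; exists w.
by rewrite in_setU !in_set0.
Qed.

Lemma reply_ann (s : st n) u w : w \in replyset (msg s u) -> ann s u != set0.
Proof.
rewrite /msg; case: (pickP' (ann s u) (rep s u)) => [y hy|y _ _|_ _]; rewrite /= ?in_set0 // => _.
by apply/set0Pn; exists y.
Qed.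

Lemma Y1 i v u w : G i.+1 v u -> (w \in ann (R i.+1 u) v) || (w \in rep (R i.+1 u) v) ->
  flag_of (msg (N i u) v) || (ann (N i v) u != set0).
Proof.
move=> h; have h' : G i.+1 u v by rewrite Gsym.
rewrite annR repR decIB h' in_setU.
case/orP => [hw|/orP [hw|hw]].
- by rewrite (@flag_msg _ _ w) // in_setU hw.
- by rewrite (@flag_msg _ _ w) // in_setU hw orbT.
- by rewrite (reply_ann hw) orbT.
Qed.

Lemma pend_bad i v u w : G i.+1 v u -> G i.+1 v w -> Pend (R i.+1) v u w -> bad (R i.+1 v).
Proof.
move=> hu hw P; rewrite badR; apply/existsP.
have Fu : forall x, (x \in ann (R i.+1 u) v) || (x \in rep (R i.+1 u) v) ->
   (u \in adj (N i v)) && (flag_of (dec (IB i v u)) || (ann (N i v) u != set0)).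
  by move=> x hx; rewrite adjN inE hu decIB hu; apply: Y1 hx.
have Fw : forall x, (x \in ann (R i.+1 w) v) || (x \in rep (R i.+1 w) v) ->
   (w \in adj (N i v)) && (flag_of (dec (IB i v w)) || (ann (N i v) w != set0)).
  by move=> x hx; rewrite adjN inE hw decIB hw; apply: Y1 hx.
case/or4P: P => [h|h|h|]; last case/or3P => [h|h|h].
- by exists u; apply: (Fu w); rewrite h.
- by exists u; apply: (Fu w); rewrite h orbT.
- by exists w; apply: (Fw u); rewrite h.
- by exists w; apply: (Fw u); rewrite h orbT.
- exists w; rewrite adjN inE hw /=; apply/orP; right; apply/set0Pn; exists u.
  by move: h; rewrite annR /rem_a; case: (pick_item _ _) => [[[] x]|] //; rewrite inE => /andP [].
- exists u; rewrite adjN inE hu /=; apply/orP; right; apply/set0Pn; exists w.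
  by move: h; rewrite annR /rem_a; case: (pick_item _ _) => [[[] x]|] //; rewrite inE => /andP [].
Qed.

Lemma correct i v u w : 0 < i ->
  acceptable (query (Alg n) v (run (Alg n) G i v) u w) (is_triangle G i v u w).
Proof.
case: i => // i _.
change (acceptable (qry v (R i.+1 v) u w) (is_triangle G i.+1 v u w)).
rewrite /qry; case hb: (bad (R i.+1 v)) => //.
rewrite /acceptable adjR !inE /is_triangle.
case hu: (G i.+1 v u); case hw: (G i.+1 v w); rewrite ?andbF ?andTb ?andbT //.
case: (eqVneq u w) => [->|uw]; first by rewrite Girr.
case/orP: (Inv hu hw uw) => [/eqP -> //|P].
by rewrite (pend_bad hu hw P) in hb.
Qed.
End R.

Theorem theorem1 :
  exists c k : nat, forall n : nat,
    exists A : algorithm n (msg_bound c n), triangle_DS_amortized A k.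
Proof.
exists 4, 4 => n; exists (Alg n) => G HG; split.
- by move=> i hi v u w; apply: correct.
- by move=> i; apply: num_bound.
Qed.
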